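(* Let $T^2=\mathbb{R}^2/\mathbb{Z}^2$, $\alpha\in\mathbb{R}$, and $H:T^2\times\mathbb{R}\to T^2$ the flow $H(x,y,t)=(x+t,y+\alpha t)$. Let $\Delta$ be the partition of $T^2$ into orbits of $H$, $Y$ the space of orbits with the quotient topology, and $p:T^2\to Y$ the projection. Then $p$ has property (CONT), and $p$ has property (COMP) if and only if $\alpha$ is rational.
   Context: A $\Delta$-map is a continuous $h:T^2\to T^2$ mapping each element of $\Delta$ into some element of $\Delta$; $\mathrm{End}(T^2,\Delta)$ is the monoid of $\Delta$-maps, $\mathrm{End}(Y)=C(Y,Y)$, and $\psi(h)$ is the unique map with $p\circ h=\psi(h)\circ p$. Property (COMP): for every compact $L\subset Y$ there is a compact $K\subset T^2$ with $p(K)=L$. Property (CONT): $\psi:\mathrm{End}(T^2,\Delta)\to\mathrm{End}(Y)$ is continuous with respect to compact open topologies. *)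

(* Defs.v *)
From HB Require Import structures.
From mathcomp Require Import all_boot all_order all_algebra.
From mathcomp Require Import all_classical all_reals all_analysis.
From mathcomp Require Import generic_quotient.
Unset Printing Implicit Defensive.
Import Order.TTheory GRing.Theory Num.Theory numFieldNormedType.Exports.
Local Open Scope classical_set_scope.
Local Open Scope ring_scope.
Local Open Scope quotient_scope.

Section Defs.
Variable R : realType.

Definition zz_rel (u v : R * R) : bool :=
  (u.1 - v.1 \is a Num.int) && (u.2 - v.2 \is a Num.int).

Lemma zz_refl : reflexive zz_rel.
Proof. by move=> u; rewrite /zz_rel !subrr rpred0. Qed.

Lemma zz_sym : symmetric zz_rel.
Proof.
by move=> u v; rewrite /zz_rel -(opprB u.1) -(opprB u.2) !rpredN.
Qed.

Lemma zz_trans : transitive zz_rel.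
Proof.
move=> v u w /andP[h1 h2] /andP[h3 h4]; apply/andP; split.
- by rewrite -(subrKA v.1); apply: rpredD.
- by rewrite -(subrKA v.2); apply: rpredD.
Qed.

Definition zz_equiv : equiv_rel (R * R) := EquivRel zz_rel zz_refl zz_sym zz_trans.

Definition torus := @quotient_topology (R * R)%type {eq_quot zz_equiv}.

Definition flow (alpha : R) (z : torus) (t : R) : torus :=
  \pi_torus (((repr z).1 + t, (repr z).2 + alpha * t) : R * R).

Definition orbit (alpha : R) (z : torus) : set torus := range (flow alpha z).

Definition orb_rel (alpha : R) (z w : torus) : bool :=
  `[< orbit alpha z = orbit alpha w >].

Lemma orb_refl alpha : reflexive (orb_rel alpha).
Proof. by move=> z; apply/asboolP. Qed.

Lemma orb_sym alpha : symmetric (orb_rel alpha).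
Proof.
move=> z w; apply/asboolP/asboolP => ->; done.
Qed.

Lemma orb_trans alpha : transitive (orb_rel alpha).
Proof. by move=> v u w /asboolP h1 /asboolP h2; apply/asboolP; rewrite h1 h2. Qed.

Definition orb_equiv alpha : equiv_rel torus :=
  EquivRel (orb_rel alpha) (@orb_refl alpha) (@orb_sym alpha) (@orb_trans alpha).

Definition orbit_space (alpha : R) : topologicalType :=
  quotient_topology {eq_quot orb_equiv alpha}.

Definition proj (alpha : R) : torus -> orbit_space alpha :=
  fun z => \pi_(orbit_space alpha) z.

Definition Delta_map (alpha : R) (h : torus -> torus) : Prop :=
  continuous h /\
  forall z : torus, exists w : torus, h @` orbit alpha z `<=` orbit alpha w.

Definition End_Delta (alpha : R) : set {compact-open, torus -> torus} :=
  [set h | Delta_map alpha h].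

(* psi(h): the map with p o h = psi(h) o p (for a Delta-map h). *)
Definition psi (alpha : R) (h : {compact-open, torus -> torus})
  : {compact-open, orbit_space alpha -> orbit_space alpha} :=
  fun y => proj alpha (h (repr y)).

Definition prop_CONT (alpha : R) : Prop :=
  {within End_Delta alpha, continuous (psi alpha)}.

Definition prop_COMP (alpha : R) : Prop :=
  forall L : set (orbit_space alpha), compact L ->
    exists K : set torus, compact K /\ proj alpha @` K = L.

End Defs.

(* Main.v *)
Require Import Defs.
From HB Require Import structures.
From mathcomp Require Import all_boot all_order all_algebra.
From mathcomp Require Import all_classical all_reals all_analysis.
From mathcomp Require Import generic_quotient.
From mathcomp.algebra_tactics Require Import ring lra.
Set Implicit Arguments. Unset Strict Implicit.
Unset Printing Implicit Defensive.
Import Order.TTheory GRing.Theory Num.Theory numFieldNormedType.Exports.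
Local Open Scope classical_set_scope.
Local Open Scope ring_scope.
Local Open Scope quotient_scope.

Section A.
Variable R : realType.
Local Notation T := (torus R).
Definition pit (u : R * R) : T := \pi_T u.
Lemma pitE u v : pit u = pit v <-> zz_rel R u v.
Proof. split. move/eqquotP. done. move=> h; apply/eqquotP. exact h. Qed.
Lemma pit_repr (z : T) : pit (repr z) = z.
Proof. exact: reprK. Qed.
Lemma pit_cont : continuous pit.
Proof. exact: pi_continuous. Qed.
Lemma projE alpha (z w : T) : Defs.proj R alpha z = Defs.proj R alpha w <-> Defs.orbit R alpha z = Defs.orbit R alpha w.
Proof. split. move/eqquotP. by move/asboolP. by move=> h; apply/eqquotP; apply/asboolP. Qed.
Lemma proj_repr alpha (y : orbit_space R alpha) : Defs.proj R alpha (repr y) = y.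
Proof. exact: reprK. Qed.
Definition orel (a : R) (u v : R * R) := exists t, zz_rel R (u.1 + t, u.2 + a * t) v.
Lemma zzE (u v : R * R) : zz_rel R u v = (u.1 - v.1 \is a Num.int) && (u.2 - v.2 \is a Num.int).
Proof. by []. Qed.
Lemma zz_shift (u v : R * R) (x y : R) : zz_rel R u v -> zz_rel R (u.1 + x, u.2 + y) (v.1 + x, v.2 + y).
Proof. by rewrite !zzE /= !opprD !addrA !(addrAC _ x) !subrK !(addrAC _ y) subrK. Qed.
Lemma flowE a u t : flow R a (pit u) t = pit (u.1 + t, u.2 + a * t).
Proof.
rewrite /flow /=; apply/pitE.
have h : zz_rel R (repr (pit u)) u by apply/pitE; rewrite pit_repr.
exact: (zz_shift t (a * t) h).
Qed.
Lemma orbitE a u : Defs.orbit R a (pit u) = [set pit (u.1 + t, u.2 + a * t) | t in setT].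
Proof. by rewrite /Defs.orbit; apply/seteqP; split => z [t _ <-]; exists t => //; rewrite flowE. Qed.
Lemma projP a u v : Defs.proj R a (pit u) = Defs.proj R a (pit v) <-> orel a u v.
Proof.
rewrite projE !orbitE; split.
  move=> e.
  have : [set pit (v.1 + t, v.2 + a * t) | t in setT] (pit v).
    by exists 0 => //; rewrite mulr0 !addr0; case: v {e}.
  rewrite -e => -[t _ /pitE h]; by exists t.
case=> t h; apply/seteqP; split => z [s _ <-].
  exists (s - t) => //; apply/pitE.
  have := zz_shift (s - t) (a * (s - t)) h => /=.
  have e : t + (s - t) = s by rewrite addrC subrK.
  by rewrite -!addrA -mulrDr e zz_sym.
exists (s + t) => //; apply/pitE.
have := zz_shift s (a * s) h => /=.
by rewrite -!addrA mulrDr (addrC t s) (addrC (a * t)).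
Qed.
Lemma Ysurj a (y : orbit_space R a) : y = Defs.proj R a (pit (repr (repr y))).
Proof. by rewrite pit_repr proj_repr. Qed.
End A.
Section E.
Variable R : realType.
Local Notation pi := (@trigo.pi R).
Definition e (x : R) : R := cos (pi *+ 2 * x).
Lemma e_cont : continuous e.
Proof.
move=> x; apply: continuous_comp; last exact: continuous_cos.
by apply: cvgM; [exact: cvg_cst | exact: cvg_id].
Qed.
Lemma e_nat (y : R) (n : nat) : e (y + n%:R) = e y.
Proof. by rewrite /e mulrDr mulr_natr periodicn //; exact: cosD2pi. Qed.
Lemma e_per (x y : R) : x - y \is a Num.int -> e x = e y.
Proof.
move=> /intrP[k hk]; have -> : x = y + k%:~R by rewrite -hk addrC subrK.
case: k {hk} => n; first by rewrite e_nat.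
rewrite NegzE mulrNz.
by have := e_nat (y - (n.+1)%:R) n.+1; rewrite subrK => <-.
Qed.
Lemma e_le1 (x : R) : e x <= 1.
Proof. exact: cos_le1. Qed.
Lemma e_eq1 (x : R) : e x = 1 -> x \is a Num.int.
Proof.
move=> h.
set k := Num.floor x; set r := x - k%:~R.
have r0 : 0 <= r by rewrite subr_ge0 Num.Theory.floor_le.
have r1 : r < 1.
  by rewrite ltrBlDl; have := Num.Theory.floorD1_gt x; rewrite intrD addrC.
have er : e r = 1 by rewrite -h; apply: e_per; rewrite /r addrAC subrr add0r rpredN intr_int.
suff : r = 0 by move=> r00; rewrite -[x](subrK (k%:~R)) -/r r00 add0r intr_int.
have p0 := pi_gt0 R.
have [le|lt] := leP (pi *+ 2 * r) pi.
  have hc : cos (pi *+ 2 * r) = cos 0 by rewrite cos0.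
  have pg : 0 <= pi by exact: ltW.
  have m1 : pi *+ 2 * r \in `[0, pi] by rewrite in_itv /= le mulr_ge0 // mulrn_wge0.
  have m2 : 0 \in `[0, pi] by rewrite in_itv /= lexx pg.
  move: (cos_inj m1 m2 hc) => /eqP.
  by rewrite mulf_eq0 mulrn_eq0 /= (gt_eqF p0) => /eqP.
exfalso.
have hc : cos (pi *+ 2 - pi *+ 2 * r) = cos 0.
  by rewrite cos0 addrC cosD2pi cosN.
have pg : 0 <= pi by exact: ltW.
have m1 : pi *+ 2 - pi *+ 2 * r \in `[0, pi].
  have key : forall P : R, 0 < P -> P < P *+ 2 * r -> 0 <= P *+ 2 - P *+ 2 * r <= P.
    by move=> P hP hl; rewrite !mulr2n mulrDl in hl *; apply/andP; split; nra.
  by rewrite in_itv /=; apply: key.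
have m2 : 0 \in `[0, pi] by rewrite in_itv /= lexx pg.
move: (cos_inj m1 m2 hc) => /eqP; rewrite subr_eq0 -{1}[pi *+ 2]mulr1.
have n2 : pi *+ 2 != 0 by apply: lt0r_neq0; rewrite mulr2n; exact: addr_gt0.
rewrite (inj_eq (mulfI n2)).
by move=> /eqP e1; move: r1; rewrite -e1 ltxx.
Qed.
End E.
Lemma sep_hausdorff (R : realType) (X : topologicalType) :
  (forall p q : X, p != q -> exists f : X -> R, continuous f /\ f p != f q) ->
  hausdorff_space X.
Proof.
move=> H p q cl; apply/eqP; apply: contraT => ne.
have [f [cf nf]] := H _ _ ne.
suff : f p = f q by move/eqP; rewrite (negbTE nf).
apply: Rhausdorff => A B nA nB.
have [x [Ax Bx]] := cl _ _ (cf p A nA) (cf q B nB).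
by exists (f x).
Qed.
Section B.
Variable R : realType.
Local Notation T := (torus R).
Local Notation pit := (@pit R).
Lemma cont_e1 (c : R) : continuous (fun u : R * R => e (u.1 - c)).
Proof.
move=> u; apply: continuous_comp; last exact: e_cont.
apply: cvgB; [exact: cvg_fst | exact: cvg_cst].
Qed.
Lemma cont_e2 (c : R) : continuous (fun u : R * R => e (u.2 - c)).
Proof.
move=> u; apply: continuous_comp; last exact: e_cont.
apply: cvgB; [exact: cvg_snd | exact: cvg_cst].
Qed.
Lemma repr_pit (u : R * R) : zz_rel R (repr (pit u)) u.
Proof. by apply/pitE; rewrite pit_repr. Qed.
Lemma torus_hausdorff : hausdorff_space T.
Proof.
apply: (@sep_hausdorff R) => p q ne.
pose a := repr p.
pose f := fun z : T => e ((repr z).1 - a.1) + e ((repr z).2 - a.2).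
exists f; split.
  apply/quotient_continuous.
  have -> : f \o \pi_T = (fun u : R * R => e (u.1 - a.1) + e (u.2 - a.2)).
    apply: funext => u /=; rewrite /f.
    have /andP[h1 h2] := repr_pit u.
    congr (_ + _); apply: e_per; rewrite opprB addrA subrK //.
  move=> u; exact: (cvgD (@cont_e1 a.1 u) (@cont_e2 a.2 u)).
apply: contra ne => /eqP hf.
have e11 : e ((repr p).1 - a.1) = 1 by rewrite subrr /e mulr0 cos0.
have e21 : e ((repr p).2 - a.2) = 1 by rewrite subrr /e mulr0 cos0.
rewrite /f e11 e21 in hf.
have l1 := e_le1 ((repr q).1 - a.1).
have l2 := e_le1 ((repr q).2 - a.2).
have q1 : e ((repr q).1 - a.1) = 1.
  apply/eqP; rewrite eq_le; apply/andP; split=> //; lra.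
have q2 : e ((repr q).2 - a.2) = 1.
  apply/eqP; rewrite eq_le; apply/andP; split=> //; lra.
apply/eqP; rewrite -(pit_repr p) -(pit_repr q); apply/pitE; rewrite zz_sym zzE.
by rewrite (e_eq1 q1) (e_eq1 q2).
Qed.
Lemma torus_compact : compact [set: T].
Proof.
have -> : [set: T] = pit @` (`[0, 1]%classic `*` `[0, 1]%classic).
  apply/seteqP; split => // z _.
  pose u := repr z.
  exists ((u.1 - (Num.floor u.1)%:~R), (u.2 - (Num.floor u.2)%:~R)).
    split => /=; rewrite in_itv /= subr_ge0 Num.Theory.floor_le /= lerBlDl;
    apply: ltW; have := Num.Theory.floorD1_gt (u.1); have := Num.Theory.floorD1_gt (u.2);
    rewrite !intrD !(addrC _ 1) //.
  rewrite -(pit_repr z); apply/pitE; rewrite zzE /= /u.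
  by rewrite addrAC subrr add0r rpredN intr_int addrAC subrr add0r rpredN intr_int.
apply: continuous_compact; first exact/continuous_subspaceT/pit_cont.
by apply: compact_setX; exact: segment_compact.
Qed.
End B.
Section C.
Variable R : realType.
Variable a : R.
Definition G (x : R) := exists m n : int, x = m%:~R * a + n%:~R.
Lemma GD x y : G x -> G y -> G (x + y).
Proof. by move=> [m [n ->]] [m' [n' ->]]; exists (m + m'), (n + n'); rewrite !intrD; ring. Qed.
Lemma GN x : G x -> G (- x).
Proof. by move=> [m [n ->]]; exists (- m), (- n); rewrite !intrN; ring. Qed.
Lemma GM (k : int) x : G x -> G (k%:~R * x).
Proof. by move=> [m [n ->]]; exists (k * m), (k * n); rewrite !intrM; ring. Qed.
Lemma G1 : G 1. Proof. by exists 0, 1; rewrite mul0r add0r. Qed.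
Lemma Ga : G a. Proof. by exists 1, 0; rewrite mul1r addr0. Qed.
Hypothesis irr : ~ exists q : rat, a = ratr q.
Lemma G_small eps : 0 < eps -> exists g, G g /\ 0 < g < eps.
Proof.
move=> e0; apply: contrapT => H.
have lbe : forall g, G g -> 0 < g -> eps <= g.
  move=> g Gg g0; rewrite leNgt; apply/negP => ge; apply: H; exists g; split => //.
  by rewrite g0.
pose S := [set g | G g /\ 0 < g].
have S1 : S 1 by split; [exact: G1 | exact: ltr01].
have hS : has_inf S by split; [exists 1 | exists 0 => g [] _ /ltW].
pose s := inf S.
have es : eps <= s by apply: lb_le_inf; [exists 1 | move=> g [Gg g0]; exact: lbe].
have s0 : 0 < s by exact: lt_le_trans es.
have Ss : S s.
  apply: contrapT => nS.
  have [g1 Sg1 g1l] := inf_adherent s0 hS.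
  have sg1 : s < g1 := inf_lb_strict hS.2 nS Sg1.
  have d0 : 0 < g1 - s by rewrite subr_gt0.
  have [g2 Sg2 g2l] := inf_adherent d0 hS.
  have sg2 : s < g2 := inf_lb_strict hS.2 nS Sg2.
  have Sd : S (g1 - g2).
    split; first by apply: GD; [exact: Sg1.1 | apply: GN; exact: Sg2.1].
    rewrite subr_gt0; rewrite -/s in g2l; move: g2l; rewrite addrC subrK //.
  have := ge_inf hS.2 Sd; rewrite -/s => hh.
  rewrite -/s in g1l g2l; move: g2l; rewrite addrC subrK => g2l.
  lra.
have mult : forall g, G g -> exists k : int, g = k%:~R * s.
  move=> g Gg; exists (Num.floor (g / s)).
  pose r := g - (Num.floor (g / s))%:~R * s.
  have Gr : G r by apply: GD => //; apply: GN; apply: GM; exact: Ss.1.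
  have r0 : 0 <= r.
    rewrite subr_ge0 -ler_pdivlMr //; exact: Num.Theory.floor_le.
  have rs : r < s.
    rewrite ltrBlDl -[X in _ + X]mul1r -mulrDl -ltr_pdivrMr //.
    by have := Num.Theory.floorD1_gt (g / s); rewrite intrD.
  have : r = 0.
    apply/eqP; rewrite eq_le r0 andbT leNgt; apply/negP => rpos.
    have := ge_inf hS.2 (conj Gr rpos); rewrite -/s; lra.
  by move/eqP; rewrite subr_eq0 => /eqP.
have [k1 e1] := mult 1 G1.
have [k2 e2] := mult a Ga.
apply: irr; exists (k2%:Q / k1%:Q).
have k10 : (k1%:~R : R) != 0 by apply/eqP => h0; move: e1; rewrite h0 mul0r => /eqP; rewrite oner_eq0.
rewrite fmorph_div !rmorph_int e2.
have -> : s = 1 / k1%:~R.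
  by apply: (mulfI k10); rewrite -e1 mulrA mulr1 divff.
by rewrite mul1r.
Qed.
Lemma G_dense c eps : 0 < eps -> exists g, G g /\ `|g - c| < eps.
Proof.
move=> e0; have [g [Gg /andP[g0 ge]]] := G_small e0.
exists ((Num.floor (c / g))%:~R * g); split; first exact: GM.
have h1 := Num.Theory.floor_le (c / g).
have h2 := Num.Theory.floorD1_gt (c / g).
rewrite intrD in h2.
rewrite ler_pdivlMr // in h1; rewrite ltr_pdivrMr // mulrDl mul1r in h2.
rewrite ltr_distlC; apply/andP; split; lra.
Qed.
End C.
Section D.
Variable R : realType.
Variable a : R.
Local Notation T := (torus R).
Local Notation Y := (orbit_space R a).
Local Notation pit := (@pit R).
Local Notation proj := (Defs.proj R a).
Definition P (u : R * R) : Y := proj (pit u).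
Lemma proj_cont : continuous proj.
Proof. exact: pi_continuous. Qed.
Lemma P_cont : continuous P.
Proof. by move=> u; apply: continuous_comp; [exact: pit_cont | exact: proj_cont]. Qed.
Lemma openYP (V : set Y) : open (P @^-1` V) -> open V.
Proof. by []. Qed.
Lemma PP u v : P u = P v <-> orel a u v.
Proof. exact: projP. Qed.
Lemma P_surj (y : Y) : exists u, P u = y.
Proof. by exists (repr (repr y)); rewrite /P -Ysurj. Qed.
Lemma open_ballP (W : set (R * R)) w : open W -> W w ->
  exists2 e, 0 < e & forall z : R * R, `|z.1 - w.1| < e -> `|z.2 - w.2| < e -> W z.
Proof.
move=> oW Ww; have : nbhs w W by apply: open_nbhs_nbhs; split.
move/nbhs_ballP => [e e0 sub]; exists e => // z h1 h2; apply: sub.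
by split; rewrite -ball_normE /ball_ /= distrC.
Qed.
Lemma indiscrete_compact (X : topologicalType) :
  (forall V : set X, open V -> V = set0 \/ V = setT) -> forall A : set X, compact A.
Proof.
move=> H A F PF FA.
have [x Ax] : A !=set0 by exact: (filter_ex FA).
exists x; split => //.
move=> U1 U2 FU1; rewrite nbhsE => -[W [oW Wx] WC].
case: (H W oW) => hW; first by rewrite hW in Wx.
have FBC : F (U1 `&` U2).
  by apply: filterS FU1 => z Bz; split => //; apply: WC; rewrite hW.
exact: filter_ex FBC.
Qed.
Hypothesis irr : ~ exists q : rat, a = ratr q.
Lemma Y_indiscrete (V : set Y) : open V -> V = set0 \/ V = setT.
Proof.
move=> oV; case: (pselect (V !=set0)) => [[y Vy]|nV]; last first.
  by left; apply/seteqP; split => // z Vz; apply: nV; exists z.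
right; apply/seteqP; split => // y' _.
have oW : open (P @^-1` V) by exact: (continuousP _).1 P_cont _ oV.
have [w Pw] := P_surj y.
have Ww : (P @^-1` V) w by rewrite /= Pw.
have [e e0 sub] := open_ballP oW Ww.
have [u Pu] := P_surj y'; rewrite -Pu.
pose c := w.2 - u.2 - a * (w.1 - u.1).
have [g [[m [n gE]] gc]] := G_dense irr c e0.
have -> : P u = P (w.1, u.2 + a * (w.1 - u.1) + g).
  apply/PP; exists (w.1 - u.1 + m%:~R); rewrite zzE /=.
  rewrite gE.
  have -> : u.1 + (w.1 - u.1 + m%:~R) - w.1 = m%:~R by ring.
  have -> : u.2 + a * (w.1 - u.1 + m%:~R) - (u.2 + a * (w.1 - u.1) + (m%:~R * a + n%:~R)) = (- n)%:~R by rewrite intrN; ring.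
  by rewrite !intr_int.
apply: sub => /=; first by rewrite subrr normr0.
have -> : u.2 + a * (w.1 - u.1) + g - w.2 = g - c by rewrite /c; ring.
exact: gc.
Qed.
End D.
Section Irr.
Variable R : realType.
Variable a : R.
Local Notation T := (torus R).
Local Notation Y := (orbit_space R a).
Local Notation pit := (@pit R).
Local Notation proj := (Defs.proj R a).
Local Notation P := (@P R a).
Hypothesis irr : ~ exists q : rat, a = ratr q.
Lemma cont_irr : prop_CONT R a.
Proof.
apply: continuous_subspaceT => h.
have FF : Filter (psi R a @ h) by apply: fmap_filter; exact: nbhs_filter.
apply/(compact_open_cvgP _ FF) => K O cK oO hKO.
case: (Y_indiscrete irr oO) => hO; last first.
  by apply: filterS (@filterT _ _ _) => g _ y _; rewrite hO.
apply: filterS (@filterT _ _ _) => g _ y [k Kk _].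
have : (psi R a h @` K) (psi R a h k) by exists k.
by move/hKO; rewrite hO.
Qed.
Definition fl (u : R * R) : R := u.2 - a * u.1.
Lemma fl_cont : continuous fl.
Proof.
move=> u; apply: cvgB; first exact: cvg_snd.
by apply: cvgM; [exact: cvg_cst | exact: cvg_fst].
Qed.
Definition box (n : nat) : set (R * R) := `[- n%:R, n%:R]%classic `*` `[- n%:R, n%:R]%classic.
Lemma notG_orbit c : ~ G a c -> P (0, c) <> P (0, 0).
Proof.
move=> nG /PP [t]; rewrite zzE /= !add0r !subr0 => /andP [/intrP[m hm] /intrP[n hn]].
apply: nG; exists (- m), n; rewrite intrN -hm -hn; ring.
Qed.
Lemma G_orbit (x y : R) : G a (fl (x, y)) -> P (x, y) = P (0, 0).
Proof.
move=> [m [n hg]]; rewrite /fl /= in hg.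
apply/PP; exists (- x - m%:~R); rewrite zzE /= !subr0.
have -> : x + (- x - m%:~R) = (- m)%:~R by rewrite intrN; ring.
have -> : y + a * (- x - m%:~R) = n%:~R by move: hg; lra.
by rewrite !intr_int.
Qed.
Lemma not_comp_irr : ~ prop_COMP R a.
Proof.
move=> hC.
pose L := ~` [set P (0, 0)].
have [K [cK KL]] := hC L (@indiscrete_compact Y (Y_indiscrete irr) L).
have Kcl : closed K := compact_closed (@torus_hausdorff R) cK.
pose Kt := pit @^-1` K.
have Ktcl : closed Kt by move/continuous_closedP: (@pit_cont R); apply.
pose F n := fl @` (box n `&` Kt).
have Fcl n : closed (F n).
  apply: compact_closed; first exact: Rhausdorff.
  apply: continuous_compact; first exact/continuous_subspaceT/fl_cont.
  apply: compact_closedI => //; apply: compact_setX; exact: segment_compact.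
have FG n c : F n c -> ~ G a c.
  case=> -[x y] [_ Ktu] <- Gc.
  have hP := G_orbit Gc.
  have : L (P (x, y)) by rewrite -KL; exists (pit (x, y)).
  by rewrite /L /= hP.
have cover c : ~ G a c -> exists n, F n c.
  move=> nG; have Lc : L (P (0,c)) by apply: notG_orbit.
  rewrite -KL in Lc; case: Lc => k Kk hk.
  pose u := repr k; have pu : pit u = k := pit_repr k.
  have : P u = P (0, c) by rewrite /P pu.
  move/PP => [t]; rewrite zzE /= subr0 => /andP[/intrP[m hm] /intrP[n hn]].
  pose v := (u.1 - m%:~R, u.2 - n%:~R).
  have Ktv : Kt v.
    rewrite /Kt /=; suff -> : pit v = k by [].
    rewrite -pu; apply/pitE; rewrite zzE /= /v.
    by rewrite addrAC subrr add0r rpredN intr_int addrAC subrr add0r rpredN intr_int.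
  have fv : fl v = c by rewrite /fl /v /= -hm -hn; ring.
  exists (Num.truncn (`|v.1| + `|v.2|)).+1; exists v => //; split => //.
  have hb := real_truncnS_gt (num_real (`|v.1| + `|v.2|)).
  have n1 := normr_ge0 v.1; have n2 := normr_ge0 v.2.
  by split; rewrite /= in_itv /= -ler_norml; apply: ltW; lra.
pose gpt j := if (unpickle j : option (int * int)) is Some mn then mn.1%:~R * a + mn.2%:~R else 0.
pose D i := if odd i then ~` [set gpt i./2] else ~` F i./2.
have oD i : open (D i) /\ dense (D i).
  rewrite /D; case: (odd i); split.
  - apply: closed_openC; apply: compact_closed; [exact: Rhausdorff | exact: compact_set1].
  - move=> O [x Ox] oO.
    have : nbhs x O by apply: open_nbhs_nbhs; split.
    move/nbhs_ballP => [e e0 sub].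
    case: (pselect (x = gpt i./2)) => hx; last by exists x.
    exists (x + e / 2); split.
      apply: sub; rewrite -ball_normE /ball_ /= opprD addrA subrr add0r normrN.
      by rewrite gtr0_norm ?divr_gt0 // ltr_pdivrMr // ltr_pMr // ltr1n.
    rewrite /= -hx => h2; have : e / 2 = 0 by move: h2; lra.
    by apply/eqP; rewrite gt_eqF // divr_gt0.
  - exact: closed_openC.
  - move=> O [x Ox] oO.
    have : nbhs x O by apply: open_nbhs_nbhs; split.
    move/nbhs_ballP => [e e0 sub].
    have [g [Gg gx]] := G_dense irr x e0.
    exists g; split; last by move=> Fg; exact: (FG _ _ Fg Gg).
    by apply: sub; rewrite -ball_normE /ball_ /= distrC.
have T0 : [set: R] !=set0 by exists 0.
have [c [_ Dc]] := Baire oD T0 openT.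
have nG : ~ G a c.
  move=> [m [n cE]].
  have := Dc (pickle (m, n)).*2.+1 I; rewrite /D /= odd_double /= uphalf_double. rewrite /gpt pickleK /=.
  by apply.
have [N FN] := cover c nG.
by have := Dc N.*2 I; rewrite /D odd_double doubleK; apply.
Qed.
End Irr.
Section Rat.
Variable R : realType.
Variable a : R.
Local Notation T := (torus R).
Local Notation Y := (orbit_space R a).
Local Notation pit := (@pit R).
Local Notation proj := (Defs.proj R a).
Local Notation P := (@P R a).
Lemma self_orbit (z : T) : Defs.orbit R a z z.
Proof.
exists 0 => //; rewrite /flow mulr0 !addr0.
by case: (repr z) (pit_repr z) => x y.
Qed.
Lemma mem_orbit (w x : T) : Defs.orbit R a w x -> proj x = proj w.
Proof.
case=> t _ <-; rewrite /flow.
rewrite -[in RHS](pit_repr w); symmetry; apply/PP; exists t.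
exact: zz_refl.
Qed.
Variable q : rat.
Hypothesis aq : a = ratr q.
Let bR : R := (denq q)%:~R.
Let pR : R := (numq q)%:~R.
Lemma bR0 : bR != 0.
Proof. by rewrite /bR intr_eq0 denq_neq0. Qed.
Lemma aE : a = pR / bR.
Proof. by rewrite aq -{1}(divq_num_den q) fmorph_div !rmorph_int. Qed.
Definition phi (u : R * R) := bR * u.2 - pR * u.1.
Lemma phi_orel u v : orel a u v -> phi u - phi v \is a Num.int.
Proof.
case=> t; rewrite zzE /= => /andP[/intrP[m hm] /intrP[n hn]].
have -> : phi u - phi v = (denq q * n - numq q * m)%:~R.
  rewrite intrB !intrM -hm -hn -/bR -/pR /phi aE.
  by field; exact: bR0.
exact: intr_int.
Qed.
Lemma orel_phi u v : phi u - phi v \is a Num.int -> orel a u v.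
Proof.
case/intrP => k hk.
have cop : coprimez (numq q) (denq q).
  by rewrite coprimezE; exact: coprime_num_den.
case: (Bezoutz (numq q) (denq q)) => x [y hxy].
rewrite (eqP cop) in hxy.
exists (v.1 - u.1 - (k * x)%:~R); rewrite zzE /=.
have -> : u.1 + (v.1 - u.1 - (k * x)%:~R) - v.1 = (- (k * x))%:~R by rewrite intrN; ring.
have -> : u.2 + a * (v.1 - u.1 - (k * x)%:~R) - v.2 = (k * y)%:~R.
  have hy : (y%:~R : R) = (1 - x%:~R * pR) / bR.
    apply: (mulIf bR0); rewrite mulfVK ?bR0 //.
    have := congr1 (fun z : int => (z%:~R : R)) hxy; rewrite /= intrD !intrM -/bR -/pR.
    move=> h1; move: h1; rewrite (_ : (1%:~R : R) = 1) // => h1; lra.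
  rewrite !intrM hy aE -hk /phi.
  by field; exact: bR0.
by rewrite !intr_int.
Qed.
Lemma phi_cont (c : R) : continuous (fun u : R * R => e (phi u - c)).
Proof.
move=> u; apply: continuous_comp; last exact: e_cont.
apply: cvgB; last exact: cvg_cst.
apply: cvgB; (apply: cvgM; [exact: cvg_cst | ]); [exact: cvg_snd | exact: cvg_fst].
Qed.
Lemma Y_hausdorff : hausdorff_space Y.
Proof.
apply: (@sep_hausdorff R) => y1 y2 ne.
pose c := phi (repr (repr y1)).
pose F := fun y : Y => e (phi (repr (repr y)) - c).
exists F; split.
  apply/quotient_continuous; apply/quotient_continuous.
  have -> : (F \o \pi_Y) \o \pi_T = (fun u : R * R => e (phi u - c)).
    apply: funext => u /=; rewrite /F; apply: e_per.
    have hh : forall A B : R, A - c - (B - c) = A - B by move=> A B; ring.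
    rewrite hh.
    apply: phi_orel; apply/PP; rewrite /P pit_repr proj_repr; done.
  exact: phi_cont.
apply: contra ne => /eqP hf.
have e1 : F y1 = 1 by rewrite /F subrr /e mulr0 cos0.
rewrite e1 in hf.
have := e_eq1 (esym hf) => /orel_phi /PP.
by rewrite /P !pit_repr !proj_repr => ->.
Qed.
Lemma preim_compact (L : set Y) : compact L -> compact (proj @^-1` L).
Proof.
move=> cL.
have cl : closed (proj @^-1` L).
  by move/continuous_closedP: (@proj_cont R a); apply; exact: compact_closed Y_hausdorff cL.
exact: (subclosed_compact cl (@torus_compact R)).
Qed.
Lemma comp_rat : prop_COMP R a.
Proof.
move=> L cL; exists (proj @^-1` L); split; first exact: preim_compact.
apply/seteqP; split => [_ [z Lz <-] //|y Ly].
by exists (repr y); rewrite /= proj_repr.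
Qed.
Lemma cont_rat : prop_CONT R a.
Proof.
apply: continuous_in_subspaceT => h; rewrite inE => -[_ hD].
have FF : Filter (psi R a @ h) by apply: fmap_filter; exact: nbhs_filter.
apply/(compact_open_cvgP _ FF) => K O cK oO hKO.
pose C := proj @^-1` K; pose O' := proj @^-1` O.
have cC : compact C := preim_compact cK.
have oO' : open O' by move/continuousP: (@proj_cont R a); apply.
have oS := compact_open_open cC oO'.
have hS : [set g : {compact-open, T -> T} | g @` C `<=` O'] h.
  move=> _ [z Cz <-]; rewrite /O' /=.
  have [w hw] := hD z.
  have e1 : proj (h z) = proj w by apply: mem_orbit; apply: hw; exists z => //; exact: self_orbit.
  have z'o : Defs.orbit R a z (repr (proj z)).
    have : proj (repr (proj z)) = proj z by rewrite proj_repr.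
    move/projE => <-; exact: self_orbit.
  have e2 : proj (h (repr (proj z))) = proj w by apply: mem_orbit; apply: hw; exists (repr (proj z)).
  rewrite e1 -e2; apply: hKO; exists (proj z) => //.
have : nbhs h [set g : {compact-open, T -> T} | g @` C `<=` O'].
  by apply: open_nbhs_nbhs; split.
apply: filterS => g gS _ [y Ky <-].
apply: (gS (g (repr y))); exists (repr y) => //.
by rewrite /C /= proj_repr.
Qed.
End Rat.

Unset Implicit Arguments.

Theorem mainTheorem12 (R : realType) (alpha : R) :
  prop_CONT R alpha /\ (prop_COMP R alpha <-> exists q : rat, alpha = ratr q).
Proof.
case: (pselect (exists q : rat, alpha = ratr q)) => [[q hq]|nq].
  split; first exact: (@cont_rat R alpha q hq).
  by split => _; [exists q | exact: (@comp_rat R alpha q hq)].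
split; first exact: (@cont_irr R alpha nq).
split => [hC|//]; exfalso; exact: (@not_comp_irr R alpha nq hC).
Qed.
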